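(* Let $V\subset\mathbb{R}^d$ be a finite antichain and let $g\in S_V$ be a generated point which has two minimal generating sets of different cardinalities. Then there exist three minima $x,u,v\in D_g$ and two coordinates $i\neq j$ such that $u_i<v_i=x_i=g_i$ and $v_j<u_j=x_j=g_j$.
   Context: For $x,y\in\mathbb{R}^d$, $x\le y$ (dominance order) means $x_i\le y_i$ for all $i$; $y\rhd x$ means $y_i>x_i$ for all $i$. The join $x\vee y$ is the componentwise maximum. $V\subset\mathbb{R}^d$ is a finite antichain in the dominance order; its elements are called minima. The orthogonal surface $S_V$ is the topological boundary of $\langle V\rangle=\{x: x\ge v\text{ for some }v\in V\}$; equivalently $p\in S_V$ iff there is $v\in V$ with $v\le p$ and there is no $w\in V$ with $p\rhd w$. For $p\in S_V$ let $D_p=\{v\in V: v\le p\}$. A generated point is a point $p\in S_V$ with $p=\bigvee G$ for some nonempty $G\subseteq V$ (then $G\subseteq D_p$); such a $G$ is a generating set for $p$, and it is minimal if $\bigvee(G\setminus\{v\})\neq p$ for every $v\in G$. *)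

(* Defs.v *)
From HB Require Import structures.
From mathcomp Require Import all_boot all_order all_algebra.
From mathcomp Require Import finmap.
From mathcomp Require Import reals.
Set Implicit Arguments. Unset Strict Implicit. Unset Printing Implicit Defensive.
Import Order.TTheory GRing.Theory Num.Theory.
Local Open Scope ring_scope.
Local Open Scope fset_scope.

Section OrthSurface.
Variables (R : realType) (d : nat).
Notation pt := 'rV[R]_d.

Definition dom_le (x y : pt) : bool := [forall i : 'I_d, x 0 i <= y 0 i].
Definition dom_gt (y x : pt) : bool := [forall i : 'I_d, x 0 i < y 0 i].

Definition antichain (V : {fset pt}) : Prop :=
  forall v w, v \in V -> w \in V -> dom_le v w -> v = w.

Definition on_surface (V : {fset pt}) (p : pt) : Prop :=
  (exists2 v, v \in V & dom_le v p) /\ ~ (exists2 w, w \in V & dom_gt p w).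

Definition Dset (V : {fset pt}) (p : pt) : {fset pt} := [fset v in V | dom_le v p].

Definition is_join (G : {fset pt}) (p : pt) : Prop :=
  G != fset0 /\
  forall i : 'I_d, (forall v, v \in G -> v 0 i <= p 0 i) /\
                   (exists2 v, v \in G & v 0 i = p 0 i).

Definition generating_set (V : {fset pt}) (p : pt) (G : {fset pt}) : Prop :=
  G `<=` V /\ G != fset0 /\ is_join G p.

Definition generated_point (V : {fset pt}) (p : pt) : Prop :=
  on_surface V p /\ exists G, generating_set V p G.

Definition minimal_generating_set (V : {fset pt}) (p : pt) (G : {fset pt}) : Prop :=
  generating_set V p G /\ forall v, v \in G -> ~ is_join (G `\ v) p.

End OrthSurface.

(* Main.v *)
Require Import Defs.
From HB Require Import structures.
From mathcomp Require Import all_boot all_order all_algebra.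
From mathcomp Require Import finmap.
From mathcomp Require Import reals.
From Stdlib Require Import Classical.
Set Implicit Arguments. Unset Strict Implicit.
Import Order.TTheory GRing.Theory Num.Theory.
Local Open Scope ring_scope.
Local Open Scope fset_scope.

Section Aux.
Variables (R : realType) (d : nat) (g : 'rV[R]_d).
Notation pt := 'rV[R]_d.

Definition priv (G : {fset pt}) (w : pt) (p : 'I_d) : bool :=
  (w 0 p == g 0 p) && all (fun w' : pt => (w' 0 p == g 0 p) ==> (w' == w)) G.

Lemma privP G w p : priv G w p ->
  w 0 p = g 0 p /\ forall w', w' \in G -> w' 0 p = g 0 p -> w' = w.
Proof.
case/andP=> /eqP -> /allP H; split=> // w' /H /implyP H1 E.
by apply/eqP/H1/eqP.
Qed.

Lemma priv_exists V G w : minimal_generating_set V g G -> w \in G ->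
  (1 < #|` G|)%N -> exists p, priv G w p.
Proof.
move=> [[_ [_ [_ HJ]]] Hmin] wG Hc.
apply: NNPP => Hn; apply: (Hmin w wG); split.
  apply/eqP => E; move: Hc; rewrite (cardfsD1 w) E wG cardfs0; done.
move=> i; have [Hle [v vG Hv]] := HJ i; split.
  by move=> v' /fsetD1P [_ /Hle].
have [vw|vw] := eqVneq v w; last by exists v => //; apply/fsetD1P.
subst v.
have : ~~ priv G w i by apply/negP => Hp; apply: Hn; exists i.
rewrite /priv Hv eqxx /= => /allPn [w' w'G].
rewrite negb_imply => /andP [/eqP E N].
by exists w' => //; apply/fsetD1P.
Qed.

Definition fmap (G1 G2 : {fset pt}) (w : pt) : pt :=
  nth w [seq z : pt <- (G2 : seq pt) | [exists p, priv G1 w p && (z 0 p == g 0 p)]] 0.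

Lemma fmapP V G1 G2 w : minimal_generating_set V g G1 ->
  minimal_generating_set V g G2 -> w \in G1 -> (1 < #|` G1|)%N ->
  fmap G1 G2 w \in G2 /\ exists p, priv G1 w p && (fmap G1 G2 w 0 p == g 0 p).
Proof.
move=> H1 [[_ [_ [_ HJ2]]] _] wG Hc.
have [p Hp] := priv_exists H1 wG Hc.
have [_ [z zG Hz]] := HJ2 p.
rewrite /fmap; set s := (X in nth _ X _).
have zs : z \in s.
  by rewrite mem_filter zG andbT; apply/existsP; exists p; rewrite Hp Hz eqxx.
have Hn : (0 < size s)%N by case: s zs.
have := mem_nth w Hn; rewrite mem_filter => /andP [/existsP Hx ->].
by split.
Qed.

End Aux.

Lemma main_lt (R : realType) (d : nat) (V : {fset 'rV[R]_d}) (g : 'rV[R]_d)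
    (G1 G2 : {fset 'rV[R]_d}) :
  minimal_generating_set V g G1 ->
  minimal_generating_set V g G2 ->
  (#|` G2 | < #|` G1 |)%N ->
  exists x u v : 'rV[R]_d,
    [/\ x \in Dset V g, u \in Dset V g & v \in Dset V g] /\
    exists i j : 'I_d, i != j /\
      [/\ u 0 i < v 0 i, v 0 i = x 0 i & x 0 i = g 0 i] /\
      [/\ v 0 j < u 0 j, u 0 j = x 0 j & x 0 j = g 0 j].
Proof.
move=> H1 H2 Hlt.
have Hc : (1 < #|` G1|)%N.
  case: H2 => [[_ [ne _]] _]; apply: leq_ltn_trans Hlt.
  by rewrite lt0n cardfs_eq0.
have inD : forall G, minimal_generating_set V g G -> forall w, w \in G -> w \in Dset V g.
  move=> G [[sub [_ [_ HJ]]] _] w wG; rewrite /Dset !inE /= (fsubsetP sub w wG) /=.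
  by apply/forallP => i; have [Hle _] := HJ i; apply: Hle.
have leg : forall w, w \in Dset V g -> forall i, w 0 i <= g 0 i.
  by move=> w; rewrite /Dset inE /= => /andP [_ /forallP].
apply: NNPP => Hn.
suff : (#|` G1| <= #|` G2|)%N by rewrite leqNgt Hlt.
have Hinj : {in G1 &, injective (fmap g G1 G2)}.
  move=> w w' wG w'G E; apply: NNPP => Nww'.
  have [zG [p /andP [Pp Zp]]] := fmapP H1 H2 wG Hc.
  have [_ [p' /andP [Pp' Zp']]] := fmapP H1 H2 w'G Hc.
  rewrite -E in Zp'.
  have [wp privp] := privP Pp; have [w'p' privp'] := privP Pp'.
  have wD := inD _ H1 _ wG; have w'D := inD _ H1 _ w'G.
  have zD := inD _ H2 _ zG.
  apply: Hn; exists (fmap g G1 G2 w), w', w; split; first by [].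
  exists p, p'.
  have Nw'p : w' 0 p != g 0 p.
    by apply/eqP => Ep; apply: Nww'; symmetry; apply: privp.
  have Nwp' : w 0 p' != g 0 p'.
    by apply/eqP => Ep; apply: Nww'; apply: privp'.
  split.
    by apply/eqP => Epp; subst p'; move: Nw'p; rewrite w'p' eqxx.
  split; split.
  - by rewrite wp lt_neqAle Nw'p leg.
  - by rewrite wp (eqP Zp).
  - exact/eqP.
  - by rewrite w'p' lt_neqAle Nwp' leg.
  - by rewrite w'p' (eqP Zp').
  - exact/eqP.
rewrite -(eqP (introT (card_in_imfsetP _ _) Hinj)); apply: fsubset_leq_card.
apply/fsubsetP => z /imfsetP [w /= wG ->].
by have [] := fmapP H1 H2 wG Hc.
Qed.

Theorem lemma4p1 (R : realType) (d : nat) (V : {fset 'rV[R]_d}) (g : 'rV[R]_d)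
    (G1 G2 : {fset 'rV[R]_d}) :
  antichain V ->
  generated_point V g ->
  minimal_generating_set V g G1 ->
  minimal_generating_set V g G2 ->
  #|` G1 | <> #|` G2 | ->
  exists x u v : 'rV[R]_d,
    [/\ x \in Dset V g, u \in Dset V g & v \in Dset V g] /\
    exists i j : 'I_d, i != j /\
      [/\ u 0 i < v 0 i, v 0 i = x 0 i & x 0 i = g 0 i] /\
      [/\ v 0 j < u 0 j, u 0 j = x 0 j & x 0 j = g 0 j].
Proof.
move=> _ _ H1 H2 Hne.
case: (ltngtP #|` G1| #|` G2|) => Hc.
- exact: (main_lt H2 H1 Hc).
- exact: (main_lt H1 H2 Hc).
- by [].
Qed.
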